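(* Let $G$ be a connected bipartite graph, $v\in V(G)$, and let $c_0$ be the mill-pond configuration $MP(v)$, i.e. $c_0(v)=1$ and $c_0(x)=0$ for all $x\neq v$. Then for every $t\geq0$, $c_t(v)=1$ if $t$ is even and $c_t(v)=1-\deg(v)$ if $t$ is odd. Moreover, for $i\in\{1,2,\ldots,\epsilon(v)\}$ and $x\in N_i(v)$, \[c_t(x)=\begin{cases}0 & t<i,\\ \deg^+(x) & t\geq i \text{ and } t-i\equiv 0 \pmod 2,\\ -\deg^-(x) & t\geq i \text{ and } t-i\equiv 1\pmod 2.\end{cases}\]
   Context: Diffusion process: for a finite simple graph $G$ and a chip configuration $c_t:V(G)\to\mathbb{Z}$ (negative values allowed), the next configuration is defined simultaneously for every vertex $u$ by $c_{t+1}(u)=c_t(u)-|\{w\in N(u): c_t(u)>c_t(w)\}|+|\{w\in N(u): c_t(u)<c_t(w)\}|$. $\epsilon(v)=\max_{w\in V(G)} d(v,w)$ is the eccentricity of $v$. For $i\geq0$, $N_i(v)$ is the set of vertices at distance exactly $i$ from $v$ (so $N_0(v)=\{v\}$). For $x\in N_i(v)$ with $i\geq1$, $\deg^+(x)=|N(x)\cap N_{i-1}(v)|$; for $x\in N_i(v)$ with $i\geq0$, $\deg^-(x)=|N(x)\cap N_{i+1}(v)|$. *)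

(* Defs.v *)
From mathcomp Require Import all_boot all_order all_algebra.
Set Implicit Arguments. Unset Strict Implicit. Unset Printing Implicit Defensive.
Import Order.TTheory GRing.Theory Num.Theory.

Section Graph.
Variables (T : finType) (e : rel T).

Definition simple_graph : Prop := symmetric e /\ irreflexive e.
Definition connected_graph : Prop := forall x y : T, connect e x y.
Definition bipartite : Prop :=
  exists col : T -> bool, forall x y, e x y -> col x != col y.

Fixpoint walkb (n : nat) (x y : T) : bool :=
  if n is n'.+1 then [exists z, e x z && walkb n' z y] else x == y.

Definition inN (v : T) (i : nat) (x : T) : bool :=
  walkb i v x && [forall j : 'I_i, ~~ walkb j v x].

Definition deg (x : T) : nat := #|[set w | e x w]|.
Definition deg_plus (v : T) (i : nat) (x : T) : nat :=
  #|[set w | e x w & inN v i.-1 w]|.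
Definition deg_minus (v : T) (i : nat) (x : T) : nat :=
  #|[set w | e x w & inN v i.+1 w]|.

Local Open Scope ring_scope.
Definition diffuse (c : T -> int) : T -> int := fun u =>
  c u - (#|[set w | e u w & c w < c u]|)%:Z + (#|[set w | e u w & c u < c w]|)%:Z.
Definition config (c0 : T -> int) (t : nat) : T -> int := iter t diffuse c0.
Definition millpond (v : T) : T -> int := fun x => if x == v then 1 else 0.
End Graph.

(* Main.v *)
Require Import Defs.
From mathcomp Require Import all_boot all_order all_algebra.
From mathcomp Require Import zify.
Import Order.TTheory GRing.Theory Num.Theory.
Set Implicit Arguments. Unset Strict Implicit. Unset Printing Implicit Defensive.

Section Walks.
Variables (T : finType) (e : rel T).

Lemma walk_snoc n a x y : walkb e n a x -> e x y -> walkb e n.+1 a y.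
Proof.
elim: n a => [|n IH] a /=.
  move=> /eqP -> exy; apply/existsP; exists y; by rewrite exy eqxx.
case/existsP => z /andP[eaz wz] exy; apply/existsP; exists z.
by rewrite eaz; apply: IH wz exy.
Qed.

Lemma walk_last n a y : walkb e n.+1 a y -> exists2 z, walkb e n a z & e z y.
Proof.
elim: n a => [|n IH] a /=.
  case/existsP => z /andP[eaz /eqP <-]; by exists a.
case/existsP => z /andP[eaz wz]; have [z' wz' ez'] := IH _ wz.
exists z' => //; apply/existsP; exists z; by rewrite eaz.
Qed.

Lemma walk_col (col : T -> bool) : (forall x y, e x y -> col x != col y) ->
  forall n a x, walkb e n a x -> col x = col a (+) odd n.
Proof.
move=> Hc; elim=> [|n IH] a x /=.
  by move=> /eqP ->; rewrite addbF.
case/existsP => z /andP[eaz wz]; rewrite (IH _ _ wz).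
have := Hc _ _ eaz.
by case: (col a); case: (col z); case: (odd n).
Qed.

Lemma connect_walk a x : connect e a x -> exists n, walkb e n a x.
Proof.
case/connectP => p; elim: p a => [|y p IH] a /=.
  by move=> _ ->; exists 0%N; rewrite /= eqxx.
case/andP => eay pp Hx; have [n Hn] := IH y pp Hx.
exists n.+1; apply/existsP; exists y; by rewrite eay.
Qed.
End Walks.

Section Dist.
Variables (T : finType) (e : rel T) (v : T).
Hypothesis sym : symmetric e.
Hypothesis irr : irreflexive e.
Hypothesis conn : forall x, exists n, walkb e n v x.
Variable col : T -> bool.
Hypothesis Hcol : forall x y, e x y -> col x != col y.

Definition d (x : T) : nat := ex_minn (conn x).

Lemma d_walk x : walkb e (d x) v x.
Proof. by rewrite /d; case: ex_minnP. Qed.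

Lemma d_min n x : walkb e n v x -> (d x <= n)%N.
Proof. by rewrite /d; case: ex_minnP => m _ Hm /Hm. Qed.

Lemma inN_d i x : inN e v i x = (d x == i).
Proof.
apply/idP/idP.
  case/andP => wi /forallP Hf; rewrite eqn_leq d_min //=.
  rewrite leqNgt; apply/negP => lt; have := Hf (Ordinal lt); by rewrite d_walk.
move/eqP => <-; rewrite /inN d_walk /=; apply/forallP => j; apply/negP => wj.
have := d_min wj; by rewrite leqNgt ltn_ord.
Qed.

Lemma d_v : d v = 0%N.
Proof. by apply/eqP; rewrite -leqn0 d_min //= eqxx. Qed.

Lemma d0 x : d x = 0%N -> x = v.
Proof. move=> H; have := d_walk x; rewrite H /=; by move/eqP. Qed.

Lemma d_edge x y : e x y -> d y = (d x).+1 \/ d x = (d y).+1.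
Proof.
move=> exy.
have h1 : (d y <= (d x).+1)%N by apply: d_min; apply: walk_snoc (d_walk x) exy.
have h2 : (d x <= (d y).+1)%N by apply: d_min; apply: walk_snoc (d_walk y) _; rewrite sym.
have cx := walk_col Hcol (d_walk x); have cy := walk_col Hcol (d_walk y).
have hne : d x != d y.
  apply/negP => /eqP E; have := Hcol exy; by rewrite cx cy E eqxx.
have ho : odd (d x) != odd (d y).
  apply/negP => /eqP E; have := Hcol exy; by rewrite cx cy E eqxx.
lia.
Qed.

Lemma d_parent x : (0 < d x)%N -> exists2 z, e x z & d z = (d x).-1.
Proof.
case E: (d x) => [|n] // _.
have := d_walk x; rewrite E => /walk_last [z wz ezx].
exists z; first by rewrite sym.
have := d_min wz; have := d_edge ezx; rewrite E /=; lia.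
Qed.

Local Open Scope ring_scope.
Definition G (t : nat) (x : T) : int :=
  if d x == 0%N then (if odd t then 1 - (deg e x)%:Z else 1)
  else if (t < d x)%N then 0
  else if odd (t - d x) then - (deg_minus e v (d x) x)%:Z
  else (deg_plus e v (d x) x)%:Z.

Lemma dp_mem x w : (w \in [set w | e x w & inN e v (d x).-1 w]) = e x w && (d w < d x)%N.
Proof.
rewrite !inE inN_d; case E: (e x w) => //=.
by case: (d_edge E) => ->; apply/idP/idP; lia.
Qed.

Lemma dm_mem x w : (w \in [set w | e x w & inN e v (d x).+1 w]) = e x w && ~~ (d w < d x)%N.
Proof.
rewrite !inE inN_d; case E: (e x w) => //=.
by case: (d_edge E) => ->; apply/idP/idP; lia.
Qed.

Lemma deg_plus_pos x : (0 < d x)%N -> (0 < deg_plus e v (d x) x)%N.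
Proof.
move=> H; have [z exz dz] := d_parent H; apply/card_gt0P; exists z.
rewrite dp_mem exz /=; lia.
Qed.


Lemma deg_minus_pos x w : e x w -> d w = (d x).+1 -> (0 < deg_minus e v (d x) x)%N.
Proof.
move=> exw dw; apply/card_gt0P; exists w; rewrite dm_mem exw /=; lia.
Qed.

Lemma deg_pos x w : e x w -> (0 < deg e x)%N.
Proof. move=> exw; apply/card_gt0P; exists w; by rewrite inE. Qed.

Lemma deg_split x : deg e x = (deg_plus e v (d x) x + deg_minus e v (d x) x)%N.
Proof.
rewrite /deg -(cardsID [set w | (d w < d x)%N]) /deg_plus /deg_minus; congr (_ + _)%N.
  by apply: eq_card => w; rewrite dp_mem !inE.
by apply: eq_card => w; rewrite dm_mem !inE andbC.
Qed.

Lemma core t x w : e x w -> d w = (d x).+1 ->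
  [/\ (d x <= t)%N && ~~ odd (t - d x) -> G t w < G t x,
      (d x <= t)%N && odd (t - d x) -> G t x < G t w &
      (t < d x)%N -> G t x = G t w].
Proof.
move=> exw dw.
have p1 : (0 < deg_plus e v (d w) w)%N by apply: deg_plus_pos; rewrite dw.
have p2 := deg_minus_pos exw dw.
have p3 := deg_pos exw.
have p4 : (0 < d x)%N -> (0 < deg_plus e v (d x) x)%N by apply: deg_plus_pos.
rewrite /G dw /=; rewrite dw in p1.
case: (ltnP t (d x)) => [lt|le].
  have -> : (d x == 0%N) = false by lia.
  have -> : (t < (d x).+1)%N by lia.
  by [].
rewrite /=.
case Ek: (t - d x)%N => [|k].
  have -> : (t < (d x).+1)%N by lia.
  case: eqP => Ex /=.
    have -> : t = 0%N by lia.
    by split => //=; try lia.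
  have := p4 ltac:(lia); split => //=; try lia.
have -> : (t < (d x).+1)%N = false by lia.
have -> : (t - (d x).+1)%N = k by lia.
rewrite /=.
case: eqP => Ex /=.
  have -> : t = k.+1 by lia.
  rewrite /=; case: (odd k) => /=; split => //; lia.
have := p4 ltac:(lia); case: (odd k) => /=; split => //; try lia.
Qed.


Lemma tri (a b : int) (c1 c2 : bool) : (c1 -> b < a) -> (c2 -> a < b) ->
  (~~c1 -> ~~c2 -> a = b) -> (b < a) = c1 /\ (a < b) = c2.
Proof.
case: c1; case: c2 => /= h1 h2 h3; [have := h1 isT; have := h2 isT| have := h1 isT | have := h2 isT | have := h3 isT isT]; move=> *; split; apply/idP/idP; lia.
Qed.

Lemma cmp t x w : e x w ->
  (G t w < G t x) = (d x <= t)%N && ~~ odd (t - d x) /\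
  (G t x < G t w) = ((d x <= t)%N && odd (t - d x)) || ((t.+1 == d x) && (d w < d x))%N.
Proof.
move=> exw; apply: tri; case: (d_edge exw) => H.
- have [h1 h2 h3] := core t exw H; exact: h1.
- have ewx : e w x by rewrite sym.
  have [h1 h2 h3] := core t ewx H.
  move=> /andP[le od]; apply: h2.
  have -> : (t - d w = (t - d x).+1)%N by lia.
  rewrite /= od andbT; lia.
- have [h1 h2 h3] := core t exw H.
  have -> : (d w < d x)%N = false by lia.
  rewrite andbF orbF; exact: h2.
- have ewx : e w x by rewrite sym.
  have [h1 h2 h3] := core t ewx H.
  case/orP => [/andP[le od] | /andP[/eqP ht _]]; apply: h1.
    have -> : (t - d w = (t - d x).+1)%N by lia.
    rewrite /= od andbT; lia.
  have -> : (t - d w = 0)%N by lia.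
  rewrite /= andbT; lia.
- have [h1 h2 h3] := core t exw H.
  move=> n1 n2; apply: h3; move: n1 n2; case: (odd (t - d x)) => /=; rewrite ?andbT ?andbF; lia.
- have ewx : e w x by rewrite sym.
  have [h1 h2 h3] := core t ewx H.
  move=> n1 n2; apply/esym/h3; move: n1 n2; case: (odd (t - d x)) => /=; rewrite ?andbT ?andbF; lia.
Qed.


Lemma step t x : G t.+1 x = G t x - (#|[set w | e x w & G t w < G t x]|)%:Z
   + (#|[set w | e x w & G t x < G t w]|)%:Z.
Proof.
have cL : #|[set w | e x w & G t w < G t x]| =
   if (d x <= t)%N && ~~ odd (t - d x) then deg e x else 0%N.
  case: ifP => C.
    apply: eq_card => w; rewrite !inE; case E: (e x w) => //=; by rewrite (cmp t E).1 C.
  apply/eqP; rewrite cards_eq0; apply/eqP/setP => w; rewrite !inE.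
  case E: (e x w) => //=; by rewrite (cmp t E).1 C.
have cU : #|[set w | e x w & G t x < G t w]| =
   if (d x <= t)%N && odd (t - d x) then deg e x
   else if (t.+1 == d x) then deg_plus e v (d x) x else 0%N.
  case: ifP => C1.
    apply: eq_card => w; rewrite !inE; case E: (e x w) => //=; by rewrite (cmp t E).2 C1.
  case: ifP => C2.
    apply: eq_card => w; rewrite dp_mem !inE; case E: (e x w) => //=; by rewrite (cmp t E).2 C1 C2.
  apply/eqP; rewrite cards_eq0; apply/eqP/setP => w; rewrite !inE.
  case E: (e x w) => //=; by rewrite (cmp t E).2 C1 C2.
rewrite cL cU /G; have ds := deg_split x.
case: eqP => Ex.
  rewrite Ex subn0 /=; case: (odd t) => /=; lia.
case: (ltnP t (d x)) => lt.
  rewrite /=; case: (ltnP t.+1 (d x)) => lt2.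
    have -> : (t.+1 == d x) = false by lia.
    lia.
  have -> : (t.+1 == d x) = true by lia.
  have -> : (t.+1 - d x = 0)%N by lia.
  rewrite /=; lia.
have -> : (t.+1 < d x)%N = false by lia.
have -> : (t.+1 - d x = (t - d x).+1)%N by lia.
have -> : (t.+1 == d x) = false by lia.
rewrite /=; case: (odd (t - d x)) => /=; rewrite ds; lia.
Qed.

End Dist.

Local Open Scope ring_scope.

Theorem theorem20 (T : finType) (e : rel T) (v : T) :
  simple_graph e -> connected_graph e -> bipartite e ->
  (forall t : nat,
     config e (millpond v) t v =
       (if odd t then 1 - (deg e v)%:Z else 1)) /\
  (forall (i : nat) (x : T), (1 <= i)%N -> inN e v i x ->
     forall t : nat,
       config e (millpond v) t x =
         (if (t < i)%N then 0
          else if odd (t - i) then - (deg_minus e v i x)%:Z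
          else (deg_plus e v i x)%:Z)).
Proof.
move=> [sym irr] connG [col Hcol].
have conn : forall x, exists n, walkb e n v x := fun x => connect_walk (connG v x).
have cfg : forall t x, config e (millpond v) t x = G conn t x.
  elim=> [|t IH] x.
    rewrite /config /= /millpond /G; case: eqP => [->|ne].
      by rewrite d_v.
    have dx : d conn x != 0%N by apply/eqP => /d0.
    by rewrite (negbTE dx) lt0n dx.
  rewrite /config iterS -/(config e (millpond v) t) /diffuse.
  have E1 : [set w | e x w & config e (millpond v) t w < config e (millpond v) t x]
          = [set w | e x w & G conn t w < G conn t x].
    by apply/setP => w; rewrite !inE !IH.
  have E2 : [set w | e x w & config e (millpond v) t x < config e (millpond v) t w]
          = [set w | e x w & G conn t x < G conn t w].
    by apply/setP => w; rewrite !inE !IH.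
  by rewrite E1 E2 IH (step sym conn Hcol).
split.
  by move=> t; rewrite cfg /G d_v.
move=> i x hi hin t; rewrite cfg /G.
have dx : d conn x = i by apply/eqP; rewrite -inN_d.
rewrite dx; have -> : (i == 0)%N = false by lia.
by [].
Qed.
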